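(* Let $c\in\mathbb{N}$, $\beta$ a parameter, and $\varphi:(x_0,x_1,x_2,x_3)\mapsto\big(x_1,x_2,x_3,(x_1x_3+\beta x_2^c)/x_0\big)$. Then the two-form $$\omega=\left(\frac{dx_0\wedge dx_1}{x_0x_1}+\frac{dx_0\wedge dx_3}{x_0x_3}+\frac{dx_2\wedge dx_3}{x_2x_3}\right)-c\left(\frac{dx_0\wedge dx_2}{x_0x_2}+\frac{dx_1\wedge dx_3}{x_1x_3}\right)+(c+1)\frac{dx_1\wedge dx_2}{x_1x_2}$$ is preserved by $\varphi$ (i.e. $\varphi^*\omega=\omega$), and $\omega$ is symplectic for $c\neq 2$. When $c=2$, $\omega$ is degenerate, being the pullback of the two-form $(u_1u_2)^{-1}\,du_1\wedge du_2$ under the map $(x_0,x_1,x_2,x_3)\mapsto(u_1,u_2)=\big(x_0x_2/x_1^2,\;x_1x_3/x_2^2\big)$.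
   Context: $\mathbb{N}$ includes $0$. *)

(* Defs.v *)
From HB Require Import structures.
From mathcomp Require Import all_boot all_order all_algebra.
From mathcomp Require Import all_classical all_reals all_analysis.
Set Implicit Arguments. Unset Strict Implicit. Unset Printing Implicit Defensive.
Import Order.TTheory GRing.Theory Num.Theory.
Import numFieldNormedType.Exports.
Local Open Scope ring_scope.

Section Forms.
Variable R : realType.

Definition xc {m : nat} (x : 'rV[R]_m.+1) (i : nat) : R := x ord0 (inord i).

(* A (differential) 2-form on an open part of R^n: at each point x an
   (alternating) bilinear form on tangent vectors. *)
Definition form2 (n : nat) := 'rV[R]_n -> 'rV[R]_n -> 'rV[R]_n -> R.

Definition wedge {m : nat} (i j : nat) (v w : 'rV[R]_m.+1) : R :=
  xc v i * xc w j - xc v j * xc w i.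

Definition logwedge {m : nat} (i j : nat) (x v w : 'rV[R]_m.+1) : R :=
  wedge i j v w / (xc x i * xc x j).

Definition pullback2 (n m : nat) (f : 'rV[R]_n -> 'rV[R]_m) (eta : form2 m) : form2 n :=
  fun x v w => eta (f x) ('d f x v) ('d f x w).

Definition nondeg_bilin (n : nat) (b : 'rV[R]_n -> 'rV[R]_n -> R) : Prop :=
  forall v, (forall w, b v w = 0) -> v = 0.

(* closedness d omega = 0 on U, via the invariant formula with constant
   vector fields u v w: d omega(u,v,w) = D_u(omega(v,w)) - D_v(omega(u,w)) + D_w(omega(u,v)) *)
Definition closed2 (n : nat) (U : set 'rV[R]_n) (omega : form2 n) : Prop :=
  forall x, U x -> forall u v w : 'rV[R]_n,
    'D_u (fun y => omega y v w) x - 'D_v (fun y => omega y u w) x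
      + 'D_w (fun y => omega y u v) x = 0.

Definition symplectic (n : nat) (U : set 'rV[R]_n) (omega : form2 n) : Prop :=
  closed2 U omega /\ forall x, U x -> nondeg_bilin (omega x).

Definition phi (c : nat) (beta : R) (x : 'rV[R]_4) : 'rV[R]_4 :=
  \row_(i < 4) nth 0 [:: xc x 1; xc x 2; xc x 3;
     (xc x 1 * xc x 3 + beta * xc x 2 ^+ c) / xc x 0] i.

Definition omega (c : nat) : form2 4 := fun x v w =>
  (logwedge 0 1 x v w + logwedge 0 3 x v w + logwedge 2 3 x v w)
  - c%:R * (logwedge 0 2 x v w + logwedge 1 3 x v w)
  + (c%:R + 1) * logwedge 1 2 x v w.

Definition psi (x : 'rV[R]_4) : 'rV[R]_2 :=
  \row_(i < 2) nth 0 [:: xc x 0 * xc x 2 / xc x 1 ^+ 2;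
                         xc x 1 * xc x 3 / xc x 2 ^+ 2] i.

Definition eta2 : form2 2 := fun u v w => logwedge 0 1 u v w.

Definition torus4 : set 'rV[R]_4 := [set x | forall i : 'I_4, x ord0 i != 0].

End Forms.

(* Main.v *)
Require Import Defs.
From HB Require Import structures.
From mathcomp Require Import all_boot all_order all_algebra.
From mathcomp Require Import all_classical all_reals all_analysis.
From mathcomp Require Import ring lra.
Import Order.TTheory GRing.Theory Num.Theory.
Import numFieldNormedType.Exports.
Local Open Scope ring_scope.

Section Helpers.
Context {R : realType} {m : nat}.
Notation V := 'rV[R]_m.+1.
Implicit Types (f g : V -> R) (x v : V).

Lemma dfcoord x i : differentiable (fun y : V => xc y i) x.
Proof. exact: differentiable_coord. Qed.

Lemma dfcst x (a : R) : differentiable (fun _ : V => a) x.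
Proof. exact: differentiable_cst. Qed.

Lemma dfD f g x : differentiable f x -> differentiable g x ->
  differentiable (fun y => f y + g y) x.
Proof. exact: differentiableD. Qed.

Lemma dfN f x : differentiable f x -> differentiable (fun y => - f y) x.
Proof. exact: differentiableN. Qed.

Lemma dfM f g x : differentiable f x -> differentiable g x ->
  differentiable (fun y => f y * g y) x.
Proof. exact: differentiableM. Qed.

Lemma dfV f x : differentiable f x -> f x != 0 ->
  differentiable (fun y => (f y)^-1) x.
Proof. exact: differentiableV. Qed.

Lemma dfX f x n : differentiable f x -> differentiable (fun y => f y ^+ n) x.
Proof.
move=> df; elim: n => [|n IH].
  by under eq_fun do rewrite expr0; exact: dfcst.
by under eq_fun do rewrite exprS; exact: dfM.
Qed.

Lemma dfrow n (F : V -> 'rV[R]_n) x :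
  (forall j, differentiable (fun y => F y ord0 j) x) -> differentiable F x.
Proof.
move=> H.
have -> : F = \sum_(j < n) (fun y => F y ord0 j *: delta_mx ord0 j).
  by rewrite fct_sumE; apply/funext => y; rewrite {1}(row_sum_delta (F y)).
by apply: differentiable_sum => j; exact: differentiableZl.
Qed.

Lemma Dcoord x v i : 'D_v (fun y : V => xc y i) x = xc v i.
Proof.
have := @derive_mx R V _ _ id x v (@derivable_id _ _ x v); rewrite derive_id => /(congr1 (fun M : 'rV[R]_m.+1 => M ord0 (inord i))).
by rewrite mxE.
Qed.

Lemma Dcst x v (a : R) : 'D_v (fun _ : V => a) x = 0.
Proof. exact: derive_cst. Qed.

Lemma DD f g x v : differentiable f x -> differentiable g x ->
  'D_v (fun y => f y + g y) x = 'D_v f x + 'D_v g x.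
Proof. by move=> df dg; apply: (@deriveD _ _ _ f g); apply: diff_derivable. Qed.

Lemma DN f x v : differentiable f x ->
  'D_v (fun y => - f y) x = - 'D_v f x.
Proof. by move=> df; apply: (@deriveN _ _ _ f); apply: diff_derivable. Qed.

Lemma DM f g x v : differentiable f x -> differentiable g x ->
  'D_v (fun y => f y * g y) x = f x * 'D_v g x + g x * 'D_v f x.
Proof. by move=> df dg; rewrite (@deriveM _ _ f g) //; apply: diff_derivable. Qed.

Lemma DV f x v : differentiable f x -> f x != 0 ->
  'D_v (fun y => (f y)^-1) x = - (f x) ^- 2 * 'D_v f x.
Proof. by move=> df fx; rewrite deriveV //; apply: diff_derivable. Qed.

Lemma DX f x v n : differentiable f x ->
  'D_v (fun y => f y ^+ n) x = n%:R * f x ^+ n.-1 * 'D_v f x.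
Proof. by move=> df; have := deriveX n (@diff_derivable _ _ _ f x v df); rewrite exprfctE => ->. Qed.

Lemma dcoordE n (F : V -> 'rV[R]_n.+1) x v k : differentiable F x ->
  xc ('d F x v) k = 'D_v (fun y => xc (F y) k) x.
Proof.
move=> dF; rewrite -deriveE // derive_mx; last exact: diff_derivable.
by rewrite /xc mxE.
Qed.

End Helpers.

Ltac dtac := repeat first [ apply: dfcoord | apply: dfcst | apply: dfD | apply: dfN
  | apply: dfM | apply: dfX | apply: dfV ].
Ltac nz := cbv beta; rewrite ?mulf_neq0 ?expf_neq0 ?invr_neq0 //.
Ltac Dtac := repeat (first [rewrite Dcoord | rewrite Dcst | rewrite DD | rewrite DN
   | rewrite DM | rewrite DX | rewrite DV]); try (solve [dtac; nz]).

Lemma xc_row (R : realType) n (s : seq R) k : (k < n.+1)%N ->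
  xc (\row_(i < n.+1) nth 0 s i) k = nth 0 s k.
Proof. by move=> hk; rewrite /xc mxE inordK. Qed.

Lemma torusP (R : realType) (x : 'rV[R]_4) : torus4 x ->
  [/\ xc x 0 != 0, xc x 1 != 0, xc x 2 != 0 & xc x 3 != 0].
Proof. by move=> h; split; apply: h. Qed.

Section P1.
Variables (R : realType) (c : nat) (beta : R).

Lemma phi_diff (x : 'rV[R]_4) : xc x 0 != 0 -> differentiable (phi c beta) x.
Proof.
move=> h0; apply: dfrow => j.
have -> : (fun y => phi c beta y ord0 j) =
   (fun y => nth 0 [:: xc y 1; xc y 2; xc y 3;
     (xc y 1 * xc y 3 + beta * xc y 2 ^+ c) / xc y 0] j).
  by apply/funext => y; rewrite mxE.
case: j => [[|[|[|[|j]]]] Hj] //=; dtac; nz.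
Qed.

Lemma dphi012 (x v : 'rV[R]_4) k : xc x 0 != 0 -> (k < 3)%N ->
  xc ('d (phi c beta) x v) k = xc v k.+1.
Proof.
move=> h0 hk; rewrite dcoordE; last exact: @phi_diff x h0.
under eq_fun do rewrite xc_row ?(ltn_trans hk) //.
by case: k hk => [|[|[|]]] // _; rewrite Dcoord.
Qed.

Lemma dphi3 (x v : 'rV[R]_4) : xc x 0 != 0 ->
  xc ('d (phi c beta) x v) 3 =
   (xc x 1 * xc x 3 + beta * xc x 2 ^+ c) * (- (xc x 0) ^- 2 * xc v 0)
   + (xc x 0)^-1 * ((xc x 1 * xc v 3 + xc x 3 * xc v 1) +
       (beta * (c%:R * xc x 2 ^+ c.-1 * xc v 2) + xc x 2 ^+ c * 0)).
Proof.
move=> h0; rewrite dcoordE; last exact: @phi_diff x h0.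
under eq_fun do rewrite xc_row //=.
Dtac.
Qed.

Lemma part1 (x : 'rV[R]_4) : torus4 x -> torus4 (phi c beta x) ->
  forall v w, pullback2 (phi c beta) (omega c) x v w = omega c x v w.
Proof.
move=> /torusP[h0 h1 h2 h3] hp v w.
have h4 : xc (phi c beta x) 3 != 0 by apply: hp.
rewrite /pullback2 /omega /logwedge /wedge.
rewrite !dphi3 // !dphi012 //.
rewrite !xc_row //= in h4 *.
have hn : xc x 1 * xc x 3 + beta * xc x 2 ^+ c != 0.
  by apply: contraNneq h4 => ->; rewrite mul0r.
case: c hn h4 => [|n] hn h4.
  rewrite expr0 mulr1 in hn *; rewrite mul0r mulr0 !mul0r !addr0; field.
  by rewrite h0 h1 h2 h3 hn.
have e : xc x 2 ^+ n.+1 = xc x 2 * xc x 2 ^+ n by rewrite exprS.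
rewrite e in hn *; rewrite [n.+1.-1]/=.
field.
by rewrite h0 h1 h2 h3 hn.
Qed.

Lemma closed_omega : closed2 (@torus4 R) (omega c).
Proof.
move=> x /torusP[h0 h1 h2 h3] u v w.
rewrite /omega /logwedge /wedge.
Dtac.
field.
by rewrite h0 h1 h2 h3.
Qed.

Definition ev (k : nat) : 'rV[R]_4 :=
  \row_(i < 4) nth 0 [:: (k == 0)%:R; (k == 1)%:R; (k == 2)%:R; (k == 3)%:R] i.

Lemma nondeg_omega (x : 'rV[R]_4) : c <> 2%N -> torus4 x -> nondeg_bilin (omega c x).
Proof.
move=> hc /torusP[h0 h1 h2 h3] v H.
set z0 := xc v 0 / xc x 0; set z1 := xc v 1 / xc x 1;
set z2 := xc v 2 / xc x 2; set z3 := xc v 3 / xc x 3.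
have S0 : - z1 + c%:R * z2 - z3 = 0.
  rewrite -(mulr0 (xc x 0)) -(H (ev 0)) /omega /logwedge /wedge /ev !xc_row //=.
  rewrite /z1 /z2 /z3; field; by rewrite h0 h1 h2 h3.
have S1 : z0 - (c%:R + 1) * z2 + c%:R * z3 = 0.
  rewrite -(mulr0 (xc x 1)) -(H (ev 1)) /omega /logwedge /wedge /ev !xc_row //=.
  rewrite /z0 /z2 /z3; field; by rewrite h0 h1 h2 h3.
have S2 : - c%:R * z0 + (c%:R + 1) * z1 - z3 = 0.
  rewrite -(mulr0 (xc x 2)) -(H (ev 2)) /omega /logwedge /wedge /ev !xc_row //=.
  rewrite /z0 /z1 /z3; field; by rewrite h0 h1 h2 h3.
have S3 : z0 - c%:R * z1 + z2 = 0.
  rewrite -(mulr0 (xc x 3)) -(H (ev 3)) /omega /logwedge /wedge /ev !xc_row //=.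
  rewrite /z0 /z1 /z2; field; by rewrite h0 h1 h2 h3.
have hP : (2 - c%:R) * (1 + c%:R) != 0 :> R.
  rewrite mulf_neq0 //.
    by rewrite subr_eq0 (eqr_nat R 2 c); apply/eqP => /esym.
have e0 : (2 - c%:R) * (1 + c%:R) * z0 = 0.
  have -> : (2 - c%:R) * (1 + c%:R) * z0 = (z0 - (c%:R + 1) * z2 + c%:R * z3) + c%:R * (- c%:R * z0 + (c%:R + 1) * z1 - z3) + (c%:R + 1) * (z0 - c%:R * z1 + z2) by ring.
  by rewrite S1 S2 S3; ring.
have e1 : (2 - c%:R) * (1 + c%:R) * z1 = 0.
  have -> : (2 - c%:R) * (1 + c%:R) * z1 = - (- z1 + c%:R * z2 - z3) + (- c%:R * z0 + (c%:R + 1) * z1 - z3) + c%:R * (z0 - c%:R * z1 + z2) by ring.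
  by rewrite S0 S2 S3; ring.
have e2 : (2 - c%:R) * (1 + c%:R) * z2 = 0.
  have -> : (2 - c%:R) * (1 + c%:R) * z2 = (z0 - c%:R * z1 + z2) - (z0 - (c%:R + 1) * z2 + c%:R * z3) - c%:R * (- z1 + c%:R * z2 - z3) by ring.
  by rewrite S0 S1 S3; ring.
have e3 : (2 - c%:R) * (1 + c%:R) * z3 = 0.
  have -> : (2 - c%:R) * (1 + c%:R) * z3 = - (c%:R + 1) * (- z1 + c%:R * z2 - z3) - c%:R * (z0 - (c%:R + 1) * z2 + c%:R * z3) - (- c%:R * z0 + (c%:R + 1) * z1 - z3) by ring.
  by rewrite S0 S1 S2; ring.
have zz : forall (a b : R), b != 0 -> (2 - c%:R) * (1 + c%:R) * (a / b) = 0 -> a = 0.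
  move=> a b hb /eqP; rewrite mulf_eq0 (negbTE hP) /= mulf_eq0 invr_eq0 (negbTE hb) orbF.
  by move/eqP.
have v0 := zz _ _ h0 e0; have v1 := zz _ _ h1 e1.
have v2 := zz _ _ h2 e2; have v3 := zz _ _ h3 e3.
apply/rowP => i; rewrite mxE -(inord_val i).
by case: i => [[|[|[|[|]]]] ?] //=.
Qed.
End P1.

Section P3.
Variable R : realType.

Lemma degen (x : 'rV[R]_4) : torus4 x -> ~ nondeg_bilin (omega 2 x).
Proof.
move=> /torusP[h0 h1 h2 h3] H.
pose v : 'rV[R]_4 := \row_(i < 4) nth 0 [:: xc x 0; 2 * xc x 1; 3 * xc x 2; 4 * xc x 3] i.
have : v = 0.
  apply: H => w; rewrite /omega /logwedge /wedge /v !xc_row //=.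
  field; by rewrite h0 h1 h2 h3.
move=> /(congr1 (fun M : 'rV[R]_4 => xc M 0)); rewrite /v xc_row //= /xc mxE.
by apply/eqP.
Qed.

Lemma psi_diff (x : 'rV[R]_4) : xc x 1 != 0 -> xc x 2 != 0 -> differentiable (@psi R) x.
Proof.
move=> h1 h2; apply: dfrow => j.
have -> : (fun y => @psi R y ord0 j) =
   (fun y => nth 0 [:: xc y 0 * xc y 2 / xc y 1 ^+ 2;
                         xc y 1 * xc y 3 / xc y 2 ^+ 2] j).
  by apply/funext => y; rewrite mxE.
case: j => [[|[|j]] Hj] //=; dtac; nz.
Qed.

Lemma dpsi0 (x v : 'rV[R]_4) : xc x 1 != 0 -> xc x 2 != 0 ->
  xc ('d (@psi R) x v) 0 = 'D_v (fun y => xc y 0 * xc y 2 / xc y 1 ^+ 2) x.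
Proof.
move=> h1 h2; rewrite dcoordE; last exact: @psi_diff x h1 h2.
by under eq_fun do rewrite xc_row //=.
Qed.

Lemma dpsi1 (x v : 'rV[R]_4) : xc x 1 != 0 -> xc x 2 != 0 ->
  xc ('d (@psi R) x v) 1 = 'D_v (fun y => xc y 1 * xc y 3 / xc y 2 ^+ 2) x.
Proof.
move=> h1 h2; rewrite dcoordE; last exact: @psi_diff x h1 h2.
by under eq_fun do rewrite xc_row //=.
Qed.

Lemma pull_psi (x : 'rV[R]_4) : torus4 x ->
  forall v w, omega 2 x v w = pullback2 (@psi R) (@eta2 R) x v w.
Proof.
move=> /torusP[h0 h1 h2 h3] v w.
rewrite /pullback2 /eta2 /logwedge /wedge !dpsi0 // !dpsi1 // /psi !xc_row //=.
Dtac.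
rewrite /omega /logwedge /wedge.
field.
by rewrite h0 h1 h2 h3.
Qed.
End P3.

Theorem corollary3p3 (R : realType) (c : nat) (beta : R) :
  (* phi^* omega = omega wherever both sides are defined *)
  (forall x : 'rV[R]_4, @torus4 R x ->
     @torus4 R (phi c beta x) ->
     forall v w, pullback2 (phi c beta) (omega c) x v w = omega c x v w)
  /\ (c <> 2%N -> symplectic (@torus4 R) (omega c))
  /\ (c = 2%N ->
       (forall x : 'rV[R]_4, @torus4 R x -> ~ nondeg_bilin (omega c x))
       /\ (forall x : 'rV[R]_4, @torus4 R x ->
             forall v w, omega c x v w = pullback2 (@psi R) (@eta2 R) x v w)).
Proof.
split; first exact: part1.
split.
  move=> hc; split; first exact: closed_omega.
  by move=> x hx; apply: nondeg_omega.
move=> ->; split; first exact: degen.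
exact: pull_psi.
Qed.
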